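(* For any positive integers $M,N,K,S$, any $\epsilon_0>0$ and any data matrices $\mathbf{Y}^{(1)},\dots,\mathbf{Y}^{(S)}\in\mathbb{R}^{M\times N}$, the solution sets $\Omega^*$ and $\dot\Omega$ are nonempty and compact.
   Context: $\mathcal{O}(M)$ is the group of real $M\times M$ orthogonal matrices. For $\Phi\in\mathcal{O}(M)$ set $\mathbb{E}_S([\Phi\mathbf{Y}]_{mn}^2)=\frac1S\sum_{s=1}^S[\Phi\mathbf{Y}^{(s)}]_{mn}^2$, and let $\mathbb{E}_S(|\Phi\mathbf{Y}|^{\circ2})$ be the $M\times N$ matrix with these entries. $F_K=\{(\mathbf{W},\mathbf{H})\in\mathbb{R}_+^{M\times K}\times\mathbb{R}_+^{K\times N}:\ \|\mathbf{w}_k\|_1=1\ \text{for all }k\}$, where $\mathbf{w}_k$ is the $k$-th column of $\mathbf{W}$. For entrywise nonnegative $M\times N$ matrices $\mathbf{A},\mathbf{B}$, $D_{\epsilon_0}(\mathbf{A}|\mathbf{B})=\sum_{m,n}\Big(\frac{A_{mn}+\epsilon_0}{B_{mn}+\epsilon_0}-\log\frac{A_{mn}+\epsilon_0}{B_{mn}+\epsilon_0}-1\Big)$. Define $C_S(\Phi,\mathbf{W},\mathbf{H})=\sum_{m,n}\Big(\frac{\mathbb{E}_S([\Phi\mathbf{Y}]_{mn}^2)+\epsilon_0}{[\mathbf{W}\mathbf{H}]_{mn}+\epsilon_0}+\log([\mathbf{W}\mathbf{H}]_{mn}+\epsilon_0)\Big)$, $L_S(\Phi)=MN+\sum_{m,n}\log(\mathbb{E}_S([\Phi\mathbf{Y}]_{mn}^2)+\epsilon_0)$,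 $I_S(\Phi,\mathbf{W},\mathbf{H})=D_{\epsilon_0}(\mathbb{E}_S(|\Phi\mathbf{Y}|^{\circ2})\,|\,\mathbf{W}\mathbf{H})$ (so that $C_S=L_S+I_S$). The TL-NMF solution set is $\Omega^*=\arg\min\{C_S(\Phi,\mathbf{W},\mathbf{H}):\Phi\in\mathcal{O}(M),(\mathbf{W},\mathbf{H})\in F_K\}$, and the JD+NMF solution set is $\dot\Omega=\{(\dot\Phi,\dot{\mathbf{W}},\dot{\mathbf{H}}):\dot\Phi\in\arg\min_{\Phi\in\mathcal{O}(M)}L_S(\Phi),\ (\dot{\mathbf{W}},\dot{\mathbf{H}})\in\arg\min_{(\mathbf{W},\mathbf{H})\in F_K}C_S(\dot\Phi,\mathbf{W},\mathbf{H})\}$. *)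

(* Defs.v *)
From HB Require Import structures.
From mathcomp Require Import all_boot all_order all_algebra.
From mathcomp Require Import all_classical all_reals all_analysis.
Set Implicit Arguments. Unset Strict Implicit. Unset Printing Implicit Defensive.
Import Order.TTheory GRing.Theory Num.Theory.
Import numFieldTopology.Exports numFieldNormedType.Exports.
Local Open Scope ring_scope.
Local Open Scope classical_set_scope.

Section TLNMF.
Variables (R : realType) (M N K S : nat) (eps0 : R)
  (Y : 'I_S -> 'M[R]_(M, N)).

Definition orthogonal (Phi : 'M[R]_M) : Prop := Phi^T *m Phi = 1%:M.

Definition ES (Phi : 'M[R]_M) (m : 'I_M) (n : 'I_N) : R :=
  S%:R^-1 * \sum_(s < S) ((Phi *m Y s) m n) ^+ 2.

Definition FK (W : 'M[R]_(M, K)) (H : 'M[R]_(K, N)) : Prop :=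
  (forall m k, 0 <= W m k) /\ (forall k n, 0 <= H k n) /\
  (forall k : 'I_K, \sum_(m < M) `|W m k| = 1).

Definition CS (Phi : 'M[R]_M) (W : 'M[R]_(M, K)) (H : 'M[R]_(K, N)) : R :=
  \sum_(m < M) \sum_(n < N)
    ((ES Phi m n + eps0) / ((W *m H) m n + eps0) + ln ((W *m H) m n + eps0)).

Definition LS (Phi : 'M[R]_M) : R :=
  (M * N)%:R + \sum_(m < M) \sum_(n < N) ln (ES Phi m n + eps0).

Definition Ddiv (A B : 'M[R]_(M, N)) : R :=
  \sum_(m < M) \sum_(n < N)
    ((A m n + eps0) / (B m n + eps0) - ln ((A m n + eps0) / (B m n + eps0)) - 1).

Definition IS (Phi : 'M[R]_M) (W : 'M[R]_(M, K)) (H : 'M[R]_(K, N)) : R :=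
  Ddiv (\matrix_(m, n) ES Phi m n) (W *m H).

Local Notation triple := ('M[R]_M * 'M[R]_(M, K) * 'M[R]_(K, N))%type.

Definition Omega_star : set triple :=
  [set x | [/\ orthogonal x.1.1, FK x.1.2 x.2 &
     forall Phi W H, orthogonal Phi -> FK W H -> CS x.1.1 x.1.2 x.2 <= CS Phi W H]].

Definition Omega_dot : set triple :=
  [set x | [/\ orthogonal x.1.1,
     (forall Phi, orthogonal Phi -> LS x.1.1 <= LS Phi),
     FK x.1.2 x.2 &
     forall W H, FK W H -> CS x.1.1 x.1.2 x.2 <= CS x.1.1 W H]].

End TLNMF.

(* Main.v *)
Require Import Defs.
From HB Require Import structures.
From mathcomp Require Import all_boot all_order all_algebra.
From mathcomp Require Import all_classical all_reals all_analysis.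
From mathcomp Require Import lra.
Import Order.TTheory GRing.Theory Num.Theory.
Import numFieldTopology.Exports numFieldNormedType.Exports.
Local Open Scope ring_scope.
Local Open Scope classical_set_scope.

Lemma fst_cont {U V : topologicalType} : continuous (@fst U V).
Proof. move=> x; exact: cvg_fst. Qed.
Lemma snd_cont {U V : topologicalType} : continuous (@snd U V).
Proof. move=> x; exact: cvg_snd. Qed.

Lemma comp_cont {U V W : topologicalType} (f : U -> V) (g : V -> W) :
  continuous f -> continuous g -> continuous (fun x => g (f x)).
Proof. move=> cf cg x; exact: (@continuous_comp _ _ _ f g x (cf x) (cg (f x))). Qed.

Lemma closed_pre {U V : topologicalType} (f : U -> V) (A : set V) :
  continuous f -> closed A -> closed (f @^-1` A).
Proof. by move=> cf; apply: preimage_closed => x _; exact: cf. Qed.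

Lemma closed_le_fun (R : realType) (T : topologicalType) (f g : T -> R) :
  continuous f -> continuous g -> closed [set x | f x <= g x].
Proof.
move=> cf cg.
have -> : [set x | f x <= g x] = (fun x => f x - g x) @^-1` [set r : R | r <= 0].
  by apply/seteqP; split => x /=; rewrite subr_le0.
apply: closed_pre; last exact: closed_le.
move=> x; apply: continuousB; [exact: cf | exact: cg].
Qed.

Lemma closed_eq_fun (R : realType) (T : topologicalType) (f g : T -> R) :
  continuous f -> continuous g -> closed [set x | f x = g x].
Proof.
move=> cf cg.
have -> : [set x | f x = g x] = [set x | f x <= g x] `&` [set x | g x <= f x].
  apply/seteqP; split => x /=; first by move=> ->; rewrite lexx.
  by case=> h1 h2; apply/eqP; rewrite eq_le h1 h2.
by apply: closedI; apply: closed_le_fun.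
Qed.

Lemma closed_forall (T : topologicalType) (I : Type) (P : I -> set T) :
  (forall i, closed (P i)) -> closed [set x | forall i, P i x].
Proof.
move=> h.
have -> : [set x | forall i, P i x] = \bigcap_(i in setT) P i.
  by apply/seteqP; split => x /=; [move=> H i _; exact: H | move=> H i; exact: H].
by apply: closed_bigI => i _; exact: h.
Qed.

Lemma cont_sum (R : realType) (T : topologicalType) (I : Type) (r : seq I) (P : pred I)
  (F : I -> T -> R) : (forall i, continuous (F i)) ->
  continuous (fun x => \sum_(i <- r | P i) F i x).
Proof.
move=> cF x; elim: r => [|a r IH].
  under eq_fun do rewrite big_nil; exact: cvg_cst.
under eq_fun do rewrite big_cons.
case: (P a) => //.
exact: (continuousD (cF a x) IH).
Qed.

Lemma cont_entry (R : realType) (T : topologicalType) a b (f : T -> 'M[R]_(a, b)) i j :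
  continuous f -> continuous (fun x => f x i j).
Proof.
move=> cf x; exact: (@continuous_comp _ _ _ f (fun M : 'M[R]_(a,b) => M i j) x (cf x) (@coord_continuous R a b i j (f x))).
Qed.

Lemma cont_add (R : realType) (T : topologicalType) (f g : T -> R) :
  continuous f -> continuous g -> continuous (fun x => f x + g x).
Proof. move=> cf cg x; exact: (continuousD (cf x) (cg x)). Qed.

Lemma cont_mul (R : realType) (T : topologicalType) (f g : T -> R) :
  continuous f -> continuous g -> continuous (fun x => f x * g x).
Proof. move=> cf cg x; exact: (continuousM (cf x) (cg x)). Qed.

Lemma cont_const (T U : topologicalType) (c : U) : continuous (fun _ : T => c).
Proof. move=> x; exact: cvg_cst. Qed.

Lemma cont_inv (R : realType) (T : topologicalType) (f : T -> R) :
  continuous f -> (forall x, f x != 0) -> continuous (fun x => (f x)^-1).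
Proof. move=> cf h x; exact: (continuousV (h x) (cf x)). Qed.

Lemma cont_ln (R : realType) (T : topologicalType) (f : T -> R) :
  continuous f -> (forall x, 0 < f x) -> continuous (fun x => ln (f x)).
Proof. move=> cf h x; exact: (@continuous_comp _ _ _ f (@ln R) x (cf x) (continuous_ln (h x))). Qed.

Lemma cont_max0 (R : realType) (T : topologicalType) (f : T -> R) :
  continuous f -> continuous (fun x => Num.max (f x) 0).
Proof. move=> cf x; exact: (@continuous_max R T f (fun=> 0) x (cf x) (cvg_cst _)). Qed.

Lemma vec_mx_cont (R : realType) m n : continuous (@vec_mx R m n).
Proof.
move=> /= v A /(nbhs_ballP) [e e0 es].
apply/nbhs_ballP; exists e => //= w [_ vw]; apply: es; split => // i j.
rewrite !mxE; exact: vw.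
Qed.

Definition mbox (R : realType) (a b : nat) (c : R) : set 'M[R]_(a, b) :=
  vec_mx @` [set v : 'rV[R]_(a * b) | forall i, `[- c, c]%classic (v ord0 i)].

Lemma mbox_compact (R : realType) (a b : nat) (c : R) : compact (@mbox R a b c).
Proof.
apply: (@continuous_compact _ _ (@vec_mx R a b)).
  exact: continuous_subspaceT (@vec_mx_cont R a b).
apply: (@rV_compact _ _ (fun=> `[- c, c]%classic)) => i; exact: segment_compact.
Qed.

Lemma mbox_in (R : realType) (a b : nat) (c : R) (A : 'M[R]_(a, b)) :
  (forall i j, `|A i j| <= c) -> @mbox R a b c A.
Proof.
move=> h; exists (mxvec A); last exact: mxvecK.
move=> k /=; case/mxvec_indexP: k => i j.
rewrite mxvecE /= in_itv /= -ler_norml; exact: h.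
Qed.

Lemma sum_ge_term (R : realType) (I : finType) (F : I -> R) j :
  (forall i, 0 <= F i) -> F j <= \sum_i F i.
Proof. by move=> h; rewrite (bigD1 j) //= lerDl sumr_ge0. Qed.

Lemma cont_id (U : topologicalType) : continuous (fun x : U => x).
Proof. move=> x; exact: cvg_id. Qed.

Section Main.
Variables (R : realType) (M N K S : nat) (eps0 : R) (Y : 'I_S -> 'M[R]_(M, N)).
Hypotheses (hM : (0 < M)%N) (he : 0 < eps0).

Lemma ES_ge0 Phi m n : 0 <= ES Y Phi m n.
Proof. rewrite /ES mulr_ge0 // ?invr_ge0 ?ler0n // sumr_ge0 // => s _; exact: sqr_ge0. Qed.

Lemma ES_cont (U : topologicalType) (f : U -> 'M[R]_M) m n :
  continuous f -> continuous (fun x => ES Y (f x) m n).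
Proof.
move=> cf; rewrite /ES; apply: cont_mul; first exact: cont_const.
apply: cont_sum => s.
under eq_fun do rewrite expr2.
have h : continuous (fun x => (f x *m Y s) m n).
  under eq_fun do rewrite mxE.
  by apply: cont_sum => k; apply: cont_mul; [exact: cont_entry | exact: cont_const].
exact: cont_mul.
Qed.

Definition CSg (U : Type) (P : U -> 'M[R]_M) (Wf : U -> 'M[R]_(M, K))
  (Hf : U -> 'M[R]_(K, N)) (x : U) : R :=
  \sum_(m < M) \sum_(n < N)
   ((ES Y (P x) m n + eps0) / (Num.max ((Wf x *m Hf x) m n) 0 + eps0)
    + ln (Num.max ((Wf x *m Hf x) m n) 0 + eps0)).

Lemma CSg_cont (U : topologicalType) (P : U -> 'M[R]_M) (Wf : U -> 'M[R]_(M, K))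
  (Hf : U -> 'M[R]_(K, N)) : continuous P -> continuous Wf ->
  continuous Hf -> continuous (@CSg U P Wf Hf).
Proof.
move=> cP cW cH; rewrite /CSg; apply: cont_sum => m; apply: cont_sum => n.
have cb : continuous (fun x => Num.max ((Wf x *m Hf x) m n) 0 + eps0).
  apply: cont_add; last exact: cont_const.
  apply: cont_max0; under eq_fun do rewrite mxE.
  by apply: cont_sum => k; apply: cont_mul; exact: cont_entry.
have pb : forall x, 0 < Num.max ((Wf x *m Hf x) m n) 0 + eps0.
  by move=> x; apply: (lt_le_trans he); rewrite lerDr le_max lexx orbT.
apply: cont_add; last exact: cont_ln.
apply: cont_mul; first by apply: cont_add; [exact: ES_cont | exact: cont_const].
by apply: cont_inv => // x; exact: lt0r_neq0.
Qed.

Lemma CSg_eq (U : Type) (P : U -> 'M[R]_M) (Wf : U -> 'M[R]_(M, K))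
  (Hf : U -> 'M[R]_(K, N)) (x : U) : FK (Wf x) (Hf x) ->
  @CSg U P Wf Hf x = CS eps0 Y (P x) (Wf x) (Hf x).
Proof.
case=> hW [hH _]; rewrite /CSg /CS; apply: eq_bigr => m _; apply: eq_bigr => n _.
have hb : 0 <= (Wf x *m Hf x) m n.
  by rewrite mxE sumr_ge0 // => k _; exact: mulr_ge0.
by rewrite max_l.
Qed.

Lemma LS_cont : continuous (LS eps0 Y).
Proof.
rewrite /LS; apply: cont_add; first exact: cont_const.
apply: cont_sum => m; apply: cont_sum => n; apply: cont_ln.
  by apply: cont_add; [apply: ES_cont; exact: cont_id | exact: cont_const].
by move=> x; apply: (lt_le_trans he); rewrite lerDr ES_ge0.
Qed.

Definition orthM := [set Phi : 'M[R]_M | Defs.orthogonal Phi].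

Lemma orth_closed : closed orthM.
Proof.
have -> : orthM = [set Phi | forall i j, (Phi^T *m Phi) i j = (1%:M : 'M[R]_M) i j].
  apply/seteqP; split => Phi /=; first by rewrite /Defs.orthogonal => ->.
  by move=> h; apply/matrixP => i j; exact: h.
apply: closed_forall => i; apply: closed_forall => j.
apply: closed_eq_fun; last exact: cont_const.
under eq_fun do rewrite mxE.
apply: cont_sum => k; under eq_fun do rewrite mxE.
by apply: cont_mul; apply: cont_entry; exact: cont_id.
Qed.

Lemma orth_bound (Phi : 'M[R]_M) : Defs.orthogonal Phi -> forall i j, `|Phi i j| <= 1.
Proof.
move=> hP i j.
have hs : (Phi^T *m Phi) j j = 1 by rewrite hP mxE eqxx.
have : `|Phi i j| ^+ 2 <= 1.
  rewrite -normrX ger0_norm ?sqr_ge0 // -hs mxE.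
  have -> : Phi i j ^+ 2 = Phi^T j i * Phi i j by rewrite mxE expr2.
  apply: (@sum_ge_term R _ (fun k => Phi^T j k * Phi k j)) => k.
  by rewrite mxE -expr2 sqr_ge0.
by rewrite expr_le1.
Qed.

Definition m0 : 'I_M := Ordinal hM.
Definition W0 : 'M[R]_(M, K) := \matrix_(m, k) (m == m0)%:R.
Definition H0 : 'M[R]_(K, N) := \matrix_(k, n) 0.

Lemma FK0 : FK W0 H0.
Proof.
split; first by move=> m k; rewrite mxE ler0n.
split; first by move=> k n; rewrite mxE.
move=> k; rewrite (bigD1 m0) //= big1 => [|m hm]; first by rewrite mxE eqxx normr1 addr0.
by rewrite mxE (negbTE hm) normr0.
Qed.

Lemma orth1 : Defs.orthogonal (1%:M : 'M[R]_M).
Proof. by rewrite /Defs.orthogonal trmx1 mulmx1. Qed.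


Lemma coerc (L : R) : exists2 c : R, 0 <= c &
  forall (Phi : 'M[R]_M) (W : 'M[R]_(M, K)) (H : 'M[R]_(K, N)),
    FK W H -> forall k n, c < H k n -> L < CS eps0 Y Phi W H.
Proof.
pose K0 := \sum_(m < M) \sum_(n < N) ln eps0.
pose L' := L - K0 + ln eps0.
exists (M%:R * expR L'); first by rewrite mulr_ge0 // ?ler0n // expR_ge0.
move=> Phi W H [hW [hH hs]] k n hc.
have hMp : 0 < (M%:R : R) by rewrite ltr0n.
have hs' : \sum_(m < M) W m k = 1.
  by rewrite -(hs k); apply: eq_bigr => m _; rewrite ger0_norm.
have [m1 hm1] : exists m1, M%:R^-1 <= W m1 k.
  case: (pselect (exists m1, M%:R^-1 <= W m1 k)) => // hn; exfalso.
  have : \sum_(m < M) W m k < \sum_(m < M) (M%:R^-1 : R).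
    apply: ltr_sum; first by apply/hasP; exists m0; rewrite ?mem_index_enum.
    by move=> m _; rewrite ltNge; apply/negP => h; apply: hn; exists m.
  by rewrite hs' sumr_const card_ord -(mulr_natr (M%:R^-1)) mulVf ?lt0r_neq0 // ltxx.
set b1 := (W *m H) m1 n.
have hb1 : expR L' < b1.
  apply: (@lt_le_trans _ _ (W m1 k * H k n)).
    apply: (@lt_le_trans _ _ (M%:R^-1 * H k n)).
      by rewrite -(@ltr_pM2l _ M%:R) // mulrA mulfV ?lt0r_neq0 // mul1r.
    by rewrite ler_wpM2r.
  rewrite /b1 mxE.
  apply: (@sum_ge_term R _ (fun j => W m1 j * H j n) k) => j.
  exact: mulr_ge0.
pose t m n := (ES Y Phi m n + eps0) / ((W *m H) m n + eps0) + ln ((W *m H) m n + eps0).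
have hCS : CS eps0 Y Phi W H = K0 + \sum_(m < M) \sum_(n < N) (t m n - ln eps0).
  rewrite /CS /K0 -big_split /=; apply: eq_bigr => m _.
  by rewrite -big_split /=; apply: eq_bigr => n' _; rewrite /t addrC subrK.
have hbge m n' : 0 <= (W *m H) m n'.
  by rewrite mxE sumr_ge0 // => j _; exact: mulr_ge0.
have ht m n' : ln ((W *m H) m n' + eps0) - ln eps0 <= t m n' - ln eps0.
  rewrite lerD2r /t lerDr divr_ge0 //; last exact: addr_ge0 (hbge _ _) (ltW he).
  exact: addr_ge0 (ES_ge0 _ _ _) (ltW he).
have ht0 m n' : 0 <= t m n' - ln eps0.
  apply: le_trans (ht m n'); rewrite subr_ge0 ler_ln ?posrE //.
    by rewrite lerDr.
  by apply: (lt_le_trans he); rewrite lerDr.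
have h1 : t m1 n - ln eps0 <= \sum_(m < M) \sum_(n < N) (t m n - ln eps0).
  apply: le_trans (@sum_ge_term R _ (fun n' => t m1 n' - ln eps0) n (ht0 m1)) _.
  apply: (@sum_ge_term R _ (fun m => \sum_(n < N) (t m n - ln eps0)) m1) => m.
  exact: sumr_ge0.
have h2 : L' < ln (b1 + eps0).
  rewrite -[X in X < _]expRK ltr_ln ?posrE ?expR_gt0 //.
    by apply: (lt_trans hb1); rewrite ltrDl.
  by apply: (lt_le_trans he); rewrite lerDr (hbge m1 n).
rewrite hCS; apply: (lt_le_trans _ (lerD (lexx K0) (le_trans (ht m1 n) h1))).
rewrite /L' -/b1.
move: h2; rewrite /L'; lra.
Qed.


Lemma cont_norm (U : topologicalType) (f : U -> R) :
  continuous f -> continuous (fun x => `|f x|).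
Proof. move=> cf; apply: comp_cont => //; exact: (@norm_continuous R R). Qed.

Lemma closed_imp (U : topologicalType) (Q : Prop) (A : set U) :
  closed A -> closed [set x | Q -> A x].
Proof.
move=> cA; case: (pselect Q) => q.
  have -> : [set x | Q -> A x] = A by apply/seteqP; split => x /=; [apply | move=> ? _].
  exact: cA.
have -> : [set x | Q -> A x] = setT by apply/seteqP; split => x //= _ /q.
exact: closedT.
Qed.

Local Notation T := ('M[R]_M * 'M[R]_(M, K) * 'M[R]_(K, N))%type.

Lemma p1_cont : continuous (fun x : T => x.1.1).
Proof. exact: (comp_cont _ _ fst_cont fst_cont). Qed.
Lemma p2_cont : continuous (fun x : T => x.1.2).
Proof. exact: (comp_cont _ _ fst_cont snd_cont). Qed.
Lemma p3_cont : continuous (fun x : T => x.2).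
Proof. exact: snd_cont. Qed.

Definition CSc : T -> R := @CSg T (fun x => x.1.1) (fun x => x.1.2) (fun x => x.2).

Lemma CSc_cont : continuous CSc.
Proof. apply: CSg_cont; [exact: p1_cont | exact: p2_cont | exact: p3_cont]. Qed.

Definition fkS : set T := [set x | FK x.1.2 x.2].

Lemma fkS_closed : closed fkS.
Proof.
have -> : fkS = [set x : T | forall m k, 0 <= x.1.2 m k] `&`
   ([set x : T | forall k n, 0 <= x.2 k n] `&`
    [set x : T | forall k, \sum_(m < M) `|x.1.2 m k| = 1]).
  by apply/seteqP; split => x.
apply: closedI; last apply: closedI.
- apply: closed_forall => m; apply: closed_forall => k.
  apply: closed_le_fun; first exact: cont_const.
  apply: cont_entry; exact: p2_cont.
- apply: closed_forall => k; apply: closed_forall => n.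
  apply: closed_le_fun; first exact: cont_const.
  apply: cont_entry; exact: p3_cont.
- apply: closed_forall => k; apply: closed_eq_fun; last exact: cont_const.
  apply: cont_sum => m; apply: cont_norm; apply: cont_entry; exact: p2_cont.
Qed.

Definition orthS : set T := (fun x : T => x.1.1) @^-1` orthM.

Lemma orthS_closed : closed orthS.
Proof. apply: closed_pre; [exact: p1_cont | exact: orth_closed]. Qed.

Definition hbS (c : R) : set T := [set x : T | forall k n, x.2 k n <= c].

Lemma hbS_closed c : closed (hbS c).
Proof.
apply: closed_forall => k; apply: closed_forall => n.
apply: closed_le_fun; last exact: cont_const.
apply: cont_entry; exact: p3_cont.
Qed.

Definition D (c : R) : set T := orthS `&` fkS `&` hbS c.

Lemma D_closed c : closed (D c).
Proof. apply: closedI; last exact: hbS_closed. apply: closedI; [exact: orthS_closed | exact: fkS_closed]. Qed.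

Definition BoxT (c : R) : set T := @mbox R M M 1 `*` @mbox R M K 1 `*` @mbox R K N c.

Lemma BoxT_compact c : compact (BoxT c).
Proof. apply: compact_setX; first apply: compact_setX; exact: mbox_compact. Qed.

Lemma FK_Wbound (W : 'M[R]_(M, K)) (H : 'M[R]_(K, N)) : FK W H -> forall m k, `|W m k| <= 1.
Proof.
case=> _ [_ hs] m k; rewrite -(hs k).
by apply: (@sum_ge_term R _ (fun m => `|W m k|) m) => i.
Qed.

Lemma D_sub c : D c `<=` BoxT c.
Proof.
move=> x [[ho hf] hb]; split; first split.
- apply: mbox_in; exact: orth_bound.
- apply: mbox_in; exact: FK_Wbound hf.
- apply: mbox_in => k n; case: hf => _ [hH _].
  by rewrite ger0_norm //; exact: hb.
Qed.

Lemma D_compact c : compact (D c).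
Proof. apply: subclosed_compact (D_closed c) (BoxT_compact c) (@D_sub c). Qed.

Definition x0 : T := ((1%:M, W0), H0).

Lemma x0_D c : 0 <= c -> D c x0.
Proof.
move=> hc; split; first split.
- exact: orth1.
- exact: FK0.
- by move=> k n; rewrite /x0 /= /H0 mxE.
Qed.

Lemma CSc_eq (x : T) : fkS x -> CSc x = CS eps0 Y x.1.1 x.1.2 x.2.
Proof. move=> h; exact: (@CSg_eq T (fun x : T => x.1.1) (fun x : T => x.1.2) (fun x : T => x.2) x h). Qed.

Lemma star_part : @Omega_star R M N K S eps0 Y !=set0 /\ compact (@Omega_star R M N K S eps0 Y).
Proof.
pose C0 := CS eps0 Y 1%:M W0 H0.
have [c hc hco] := coerc C0.
have bnd : forall (Phi : 'M[R]_M) (W : 'M[R]_(M, K)) (H : 'M[R]_(K, N)),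
    FK W H -> CS eps0 Y Phi W H <= C0 -> forall k n, H k n <= c.
  move=> Phi W H hf hle k n; rewrite leNgt; apply/negP => h.
  by have := lt_le_trans (hco _ _ _ hf _ _ h) hle; rewrite ltxx.
have hC0 : CSc x0 = C0 by rewrite CSc_eq //; exact: FK0.
have [xm /set_mem xmD xmin] := @compact_EVT_min T R CSc (D c)
  (ex_intro _ x0 (x0_D c hc)) (D_compact c) (continuous_subspaceT CSc_cont).
have key : forall (Phi : 'M[R]_M) (W : 'M[R]_(M, K)) (H : 'M[R]_(K, N)),
    Defs.orthogonal Phi -> FK W H -> CSc xm <= CS eps0 Y Phi W H.
  move=> Phi W H ho hf.
  case: (pselect (exists k n, c < H k n)) => [[k [n hkn]]|hn].
    apply: (le_trans (xmin x0 (mem_set (x0_D c hc)))); rewrite hC0.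
    exact/ltW/(hco _ _ _ hf _ _ hkn).
  have hD : D c ((Phi, W), H).
    split; first by split.
    move=> k n /=; rewrite leNgt; apply/negP => h; by apply: hn; exists k, n.
  by have := xmin _ (mem_set hD); rewrite (@CSc_eq ((Phi, W), H)).
have sub : @Omega_star R M N K S eps0 Y `<=` D c.
  move=> x [ho hf hmin]; split; first by split.
  exact: (bnd x.1.1 x.1.2 x.2 hf (hmin _ _ _ orth1 FK0)).
split.
  exists xm; case: xmD => [[ho hf] _]; split => //.
  by move=> Phi W H hPo hPf; rewrite -CSc_eq //; exact: key.
apply: subclosed_compact (D_compact c) sub.
have -> : @Omega_star R M N K S eps0 Y = orthS `&` fkS `&`
   [set x | forall y : T, (orthS y /\ fkS y) -> CSc x <= CSc y].
  apply/seteqP; split => x.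
    case=> ho hf hmin; split; first by split.
    move=> y [yo yf]; rewrite !CSc_eq //; exact: hmin.
  case=> [[ho hf] hmin]; split => // Phi W H hPo hPf.
  have := hmin ((Phi, W), H) (conj hPo hPf); rewrite !CSc_eq //.
apply: closedI; first by apply: closedI; [exact: orthS_closed | exact: fkS_closed].
apply: closed_forall => y; apply: closed_imp.
apply: closed_le_fun; [exact: CSc_cont | exact: cont_const].
Qed.


Lemma orthM_compact : compact orthM.
Proof.
apply: subclosed_compact orth_closed (@mbox_compact R M M 1) _.
by move=> Phi h; apply: mbox_in; exact: orth_bound.
Qed.

Lemma dot_part : @Omega_dot R M N K S eps0 Y !=set0 /\ compact (@Omega_dot R M N K S eps0 Y).
Proof.
have [Phi1 /set_mem hPhi1 Phimin] := @compact_EVT_min _ R (LS eps0 Y) orthM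
  (ex_intro _ 1%:M orth1) orthM_compact (continuous_subspaceT LS_cont).
pose E : set T := orthM `*` [set W0] `*` [set H0].
have Ecomp : compact E.
  apply: compact_setX; first apply: compact_setX.
  - exact: orthM_compact.
  - exact: compact_set1.
  - exact: compact_set1.
have [xM _ xMmax] := @compact_EVT_max T R CSc E
  (ex_intro _ x0 (conj (conj orth1 erefl) erefl)) Ecomp (continuous_subspaceT CSc_cont).
pose C1 := CSc xM.
have hE : forall Phi : 'M[R]_M, Defs.orthogonal Phi -> CS eps0 Y Phi W0 H0 <= C1.
  move=> Phi ho; rewrite -(@CSc_eq ((Phi, W0), H0)); last exact: FK0.
  by apply: xMmax; apply: mem_set.
have [c hc hco] := coerc C1.
have bnd : forall (Phi : 'M[R]_M) (W : 'M[R]_(M, K)) (H : 'M[R]_(K, N)),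
    FK W H -> CS eps0 Y Phi W H <= C1 -> forall k n, H k n <= c.
  move=> Phi W H hf hle k n; rewrite leNgt; apply/negP => h.
  by have := lt_le_trans (hco _ _ _ hf _ _ h) hle; rewrite ltxx.
pose D2 : set T := [set x : T | forall i j, x.1.1 i j = Phi1 i j] `&` fkS `&` hbS c.
have D2c : closed D2.
  apply: closedI; last exact: hbS_closed.
  apply: closedI; last exact: fkS_closed.
  apply: closed_forall => i; apply: closed_forall => j.
  apply: closed_eq_fun; last exact: cont_const.
  apply: cont_entry; exact: p1_cont.
have D2sub : D2 `<=` D c.
  move=> x [[h1 hf] hb]; split => //; split => //.
  have e : x.1.1 = Phi1 by apply/matrixP => i j; exact: h1.
  by change (Defs.orthogonal x.1.1); rewrite e.
have x1D2 : D2 ((Phi1, W0), H0).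
  split; first split => //; first exact: FK0.
  by move=> k n; rewrite /= /H0 mxE.
have [xm /set_mem xmD xmin] := @compact_EVT_min T R CSc D2
  (ex_intro _ _ x1D2) (subclosed_compact D2c (D_compact c) D2sub)
  (continuous_subspaceT CSc_cont).
case: xmD => [[xm1 xmf] xmb].
have exm1 : xm.1.1 = Phi1 by apply/matrixP => i j; exact: xm1.
have sub : @Omega_dot R M N K S eps0 Y `<=` D c.
  move=> x [ho hl hf hmin]; split; first by split.
  exact: (bnd x.1.1 x.1.2 x.2 hf (le_trans (hmin _ _ FK0) (hE _ ho))).
split.
  exists xm; split => //.
  - by rewrite exm1.
  - by move=> Phi' ho; rewrite exm1; apply: Phimin; exact: mem_set.
  move=> W H hf; rewrite -CSc_eq // exm1.
  case: (pselect (exists k n, c < H k n)) => [[k [n hkn]]|hn].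
    apply: (le_trans (xmin _ (mem_set x1D2))).
    rewrite (@CSc_eq ((Phi1, W0), H0)); last exact: FK0.
    apply: (le_trans (hE _ hPhi1)).
    exact/ltW/(hco _ _ _ hf _ _ hkn).
  have hD : D2 ((Phi1, W), H).
    split; first by split.
    move=> k n /=; rewrite leNgt; apply/negP => h.
    by apply: hn; exists k, n.
  by have := xmin _ (mem_set hD); rewrite (@CSc_eq ((Phi1, W), H)).
apply: subclosed_compact (D_compact c) sub.
have -> : @Omega_dot R M N K S eps0 Y =
   ((fun x : T => x.1.1) @^-1` [set Phi | orthM Phi /\ LS eps0 Y Phi <= LS eps0 Y Phi1])
   `&` fkS `&`
   [set x | forall z : 'M[R]_(M, K) * 'M[R]_(K, N), FK z.1 z.2 ->
      CSc x <= @CSg T (fun x : T => x.1.1) (fun=> z.1) (fun=> z.2) x].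
  apply/seteqP; split => x.
    case=> ho hl hf hmin; split; first split => //.
      by split => //; apply: hl.
    move=> z hz; rewrite CSc_eq //.
    rewrite (@CSg_eq T (fun x : T => x.1.1) (fun=> z.1) (fun=> z.2) x hz).
    exact: hmin.
  case=> [[[ho hl] hf] hmin]; split => //.
  - by move=> Phi' hP; apply: (le_trans hl); apply: Phimin; exact: mem_set.
  - move=> W H hWH; have := hmin (W, H) hWH.
    by rewrite CSc_eq // (@CSg_eq T (fun x : T => x.1.1) (fun=> W) (fun=> H) x hWH).
apply: closedI; last first.
  apply: closed_forall => z; apply: closed_imp.
  apply: closed_le_fun; first exact: CSc_cont.
  apply: CSg_cont; [exact: p1_cont | exact: cont_const | exact: cont_const].
apply: closedI; last exact: fkS_closed.
apply: closed_pre; first exact: p1_cont.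
apply: closedI; first exact: orth_closed.
apply: closed_le_fun; [exact: LS_cont | exact: cont_const].
Qed.

End Main.

Theorem theorem1 (R : realType) (M N K S : nat) (eps0 : R)
  (Y : 'I_S -> 'M[R]_(M, N)) :
  (0 < M)%N -> (0 < N)%N -> (0 < K)%N -> (0 < S)%N -> 0 < eps0 ->
  [/\ @Omega_star R M N K S eps0 Y !=set0, compact (@Omega_star R M N K S eps0 Y),
      @Omega_dot R M N K S eps0 Y !=set0 & compact (@Omega_dot R M N K S eps0 Y)].
Proof.
move=> hM _ _ _ he.
have [h1 h2] := @star_part R M N K S eps0 Y hM he.
have [h3 h4] := @dot_part R M N K S eps0 Y hM he.
by split.
Qed.
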